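(* Let $\omega\ge1$ and $\Lambda\ge2\omega-1$ be integers, $P,\sigma^2>0$, $\textsf{snr}=P/\sigma^2$, $\kappa=\frac{\Lambda+\omega-1}{\Lambda}$, and $0<R<\frac{1}{2\kappa}\ln(1+\kappa\,\textsf{snr})$. Consider the asymptotic state evolution in the context. Then: (1) If $\omega>\big(\frac{1}{e^{2R\kappa}-1}-\frac{1}{\kappa\,\textsf{snr}}\big)^{-1}$, then $\bar\psi^1_1=\bar\psi^1_\Lambda=0$. (2) Let $X=\omega\cdot\frac{1+\kappa\,\textsf{snr}}{(\kappa\,\textsf{snr})^2}\big[\ln(1+\kappa\,\textsf{snr})-2R\kappa\big]$. For every integer $c$ with $1\le c\le\omega-1$ and $c<X$, $\bar\psi^1_c=\bar\psi^1_{\Lambda+1-c}=0$. (3) If for some integer $c_0$ with $1\le c_0\le\omega-1$ one has $\bar\psi^1_c=0$ for all $c\le c_0$ and all $c\ge\Lambda+1-c_0$, then for every $t\ge1$, $\bar\psi^t_c=0$ for all $c\in[\Lambda]$ with $\min(c,\Lambda+1-c)\le tc_0$; in particular $\bar\psi^t_c=0$ for all $c\in[\Lambda]$ once $t\ge\lceil\Lambda/(2c_0)\rceil$.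
   Context: Asymptotic state evolution for an $(\omega,\Lambda)$ base matrix (rates in nats): initialize $\bar\psi^0_c=1$ for $c\in[\Lambda]$; for $t=0,1,2,\dots$, $$\bar\phi^t_r=\sigma^2\Big(1+\frac{\kappa\,\textsf{snr}}{\omega}\sum_{c=\underline c_r}^{\overline c_r}\bar\psi^t_c\Big),\quad r\in[\Lambda+\omega-1],$$ $$\bar\psi^{t+1}_c=1-\mathbf 1\Big\{\frac{P}{\omega}\sum_{r=c}^{c+\omega-1}\frac{1}{\bar\phi^t_r}>2R\Big\},\quad c\in[\Lambda],$$ where $\underline c_r=\max\{1,r-\omega+1\}$ and $\overline c_r=\min\{r,\Lambda\}$. (This corresponds to the base matrix with $L_R=\Lambda+\omega-1$ rows, $L_C=\Lambda$ columns, $W_{rc}=P\frac{\Lambda+\omega-1}{\omega}$ if $c\le r\le c+\omega-1$ and $0$ otherwise; $\bar\psi^t_c=0$ means column block $c$ is decoded at iteration $t$.) *)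

(* Defs.v *)
From Stdlib Require Import Reals Lra Lia Arith.
Open Scope R_scope.

(* sumR lo hi f = sum_{i=lo}^{hi} f i  (empty, i.e. 0, if hi < lo) *)
Fixpoint sumR_aux (lo k : nat) (f : nat -> R) : R :=
  match k with
  | O => 0
  | S k' => f lo + sumR_aux (S lo) k' f
  end.
Definition sumR (lo hi : nat) (f : nat -> R) : R :=
  sumR_aux lo (S hi - lo) f.

Definition kappa (omega Lam : nat) : R := INR (Lam + omega - 1) / INR Lam.
Definition snr (P sigma2 : R) : R := P / sigma2.

(* Lower / upper column indices for row r: max(1, r-omega+1), min(r, Lam) *)
Definition clo (omega r : nat) : nat := Nat.max 1 (r + 1 - omega).
Definition chi (Lam r : nat) : nat := Nat.min r Lam.

(* psibar P sigma2 Rt omega Lam t c = \bar\psi^t_c  (meaningful for c in [1,Lam]) *)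
Fixpoint psibar (P sigma2 Rt : R) (omega Lam : nat) (t : nat) (c : nat) : R :=
  match t with
  | O => 1
  | S t' =>
      let phi := fun r : nat =>
        sigma2 * (1 + kappa omega Lam * snr P sigma2 / INR omega *
                      sumR (clo omega r) (chi Lam r)
                        (fun c' => psibar P sigma2 Rt omega Lam t' c')) in
      if Rlt_dec (2 * Rt) (P / INR omega * sumR c (c + omega - 1) (fun r => 1 / phi r))
      then 0 else 1
  end.

Definition phibar (P sigma2 Rt : R) (omega Lam : nat) (t r : nat) : R :=
  sigma2 * (1 + kappa omega Lam * snr P sigma2 / INR omega *
                sumR (clo omega r) (chi Lam r) (fun c' => psibar P sigma2 Rt omega Lam t c')).

(* Main.v *)
Require Import Defs.
From Stdlib Require Import Reals Lra Lia Arith.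
Open Scope R_scope.

Lemma sa_ext lo k f g : (forall i, (lo <= i < lo + k)%nat -> f i = g i) ->
  sumR_aux lo k f = sumR_aux lo k g.
Proof. revert lo; induction k as [|k IH]; intros lo H; simpl; [reflexivity|].
 rewrite H by lia. rewrite (IH (S lo)) by (intros; apply H; lia). reflexivity. Qed.

Lemma sa_le lo k f g : (forall i, (lo <= i < lo + k)%nat -> f i <= g i) ->
  sumR_aux lo k f <= sumR_aux lo k g.
Proof. revert lo; induction k as [|k IH]; intros lo H; simpl; [lra|].
 assert (f lo <= g lo) by (apply H; lia).
 assert (sumR_aux (S lo) k f <= sumR_aux (S lo) k g) by (apply IH; intros; apply H; lia). lra. Qed.

Lemma sa_nonneg lo k g : (forall i, (lo <= i < lo + k)%nat -> 0 <= g i) -> 0 <= sumR_aux lo k g.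
Proof. revert lo; induction k as [|k IH]; intros lo H; simpl; [lra|].
 assert (0 <= g lo) by (apply H; lia).
 assert (0 <= sumR_aux (S lo) k g) by (apply IH; intros; apply H; lia). lra. Qed.

Lemma sa_const lo k x : sumR_aux lo k (fun _ => x) = INR k * x.
Proof. revert lo; induction k as [|k IH]; intros lo; simpl sumR_aux; [simpl; ring|].
 rewrite IH, S_INR. ring. Qed.

Lemma sa_scale lo k x f : sumR_aux lo k (fun i => x * f i) = x * sumR_aux lo k f.
Proof. revert lo; induction k as [|k IH]; intros lo; simpl; [ring|]. rewrite IH. ring. Qed.

Lemma sa_split lo k k1 f : (k1 <= k)%nat ->
  sumR_aux lo k f = sumR_aux lo k1 f + sumR_aux (lo + k1) (k - k1) f.
Proof. revert lo k; induction k1 as [|k1 IH]; intros lo k H.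
 - simpl. rewrite Nat.add_0_r, Nat.sub_0_r. ring.
 - destruct k as [|k]; [lia|]. simpl. rewrite (IH (S lo) k) by lia.
   replace (S lo + k1)%nat with (lo + S k1)%nat by lia. ring. Qed.

Lemma sa_shift lo d k f : sumR_aux (lo + d) k f = sumR_aux lo k (fun i => f (i + d)%nat).
Proof. revert lo; induction k; intros lo; simpl; [reflexivity|]. rewrite <- IHk.
 replace (S (lo+d)) with (S lo + d)%nat by lia. reflexivity. Qed.

Lemma sa_tele lo k g h : (forall i, (lo <= i < lo + k)%nat -> h (S i) - h i <= g i) ->
  h (lo + k)%nat - h lo <= sumR_aux lo k g.
Proof. revert lo; induction k; intros lo H; simpl.
 - rewrite Nat.add_0_r. lra.
 - assert (h (S lo) - h lo <= g lo) by (apply H; lia).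
   assert (h (S lo + k)%nat - h (S lo) <= sumR_aux (S lo) k g) by (apply IHk; intros; apply H; lia).
   replace (lo + S k)%nat with (S lo + k)%nat by lia. lra. Qed.

Lemma sa_count lo k g A B :
  (forall i, (lo <= i < lo+k)%nat -> 0 <= g i <= 1 /\ ((i < A \/ B < i)%nat -> g i = 0)) ->
  sumR_aux lo k g <= INR (Nat.min (lo+k) (S B) - Nat.max lo A).
Proof. revert lo; induction k; intros lo H; simpl sumR_aux.
 - apply pos_INR.
 - assert (IH := IHk (S lo) ltac:(intros; apply H; lia)).
   destruct (H lo ltac:(lia)) as [[g0 g1] gz].
   destruct (Nat.lt_ge_cases lo A) as [h1|h1].
   + rewrite gz by lia.
     replace (Nat.min (lo + S k) (S B) - Nat.max lo A)%nat with
       (Nat.min (S lo + k) (S B) - Nat.max (S lo) A)%nat by lia. lra.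
   + destruct (Nat.le_gt_cases lo B) as [h2|h2].
     * replace (Nat.min (lo + S k) (S B) - Nat.max lo A)%nat with
         (S (Nat.min (S lo + k) (S B) - Nat.max (S lo) A))%nat by lia. rewrite S_INR. lra.
     * rewrite gz by lia.
       replace (Nat.min (lo + S k) (S B) - Nat.max lo A)%nat with
         (Nat.min (S lo + k) (S B) - Nat.max (S lo) A)%nat by lia. lra.
Qed.

Lemma inv_le x y : 0 < y -> y <= x -> 1 / x <= 1 / y.
Proof. intros. unfold Rdiv. rewrite !Rmult_1_l. apply Rinv_le_contravar; lra. Qed.

Lemma psibar_S P s2 Rt w Lm t c : psibar P s2 Rt w Lm (S t) c =
  if Rlt_dec (2 * Rt) (P / INR w * sumR c (c + w - 1) (fun r => 1 / phibar P s2 Rt w Lm t r))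
  then 0 else 1.
Proof. reflexivity. Qed.

Lemma psi01 P s2 Rt w Lm t c : psibar P s2 Rt w Lm t c = 0 \/ psibar P s2 Rt w Lm t c = 1.
Proof. destruct t. right; reflexivity. rewrite psibar_S. destruct Rlt_dec; auto. Qed.

Lemma psi_zero_iff P s2 Rt w Lm t c : psibar P s2 Rt w Lm (S t) c = 0 <->
  2 * Rt < P / INR w * sumR c (c + w - 1) (fun r => 1 / phibar P s2 Rt w Lm t r).
Proof. rewrite psibar_S. destruct Rlt_dec; split; intros; auto; lra. Qed.

Lemma sumR_w c w F : (1 <= w)%nat -> sumR c (c + w - 1) F = sumR_aux c w F.
Proof. intros. unfold sumR. replace (S (c + w - 1) - c)%nat with w by lia. reflexivity. Qed.

Lemma kappa_pos w Lm : (1 <= w)%nat -> (1 <= Lm)%nat -> 0 < kappa w Lm.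
Proof. intros. unfold kappa. apply Rdiv_lt_0_compat; apply lt_0_INR; lia. Qed.

Lemma coef_pos P s2 w Lm : 0 < P -> 0 < s2 -> (1 <= w)%nat -> (1 <= Lm)%nat ->
  0 < kappa w Lm * snr P s2 / INR w.
Proof. intros. apply Rdiv_lt_0_compat; [|apply lt_0_INR; lia].
 apply Rmult_lt_0_compat; [apply kappa_pos; auto|]. unfold snr; apply Rdiv_lt_0_compat; auto. Qed.

Lemma phibar_pos P s2 Rt w Lm t r : 0 < P -> 0 < s2 -> (1 <= w)%nat -> (1 <= Lm)%nat ->
  0 < phibar P s2 Rt w Lm t r.
Proof. intros HP Hs Hw HL. unfold phibar.
 assert (0 <= sumR (clo w r) (chi Lm r) (fun c' => psibar P s2 Rt w Lm t c')).
 { unfold sumR; apply sa_nonneg; intros; destruct (psi01 P s2 Rt w Lm t i); lra. }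
 pose proof (coef_pos P s2 w Lm HP Hs Hw HL). apply Rmult_lt_0_compat; [lra|].
 assert (0 <= kappa w Lm * snr P s2 / INR w * sumR (clo w r) (chi Lm r) (fun c' => psibar P s2 Rt w Lm t c')) by (apply Rmult_le_pos; lra). lra. Qed.

Lemma phibar_le P s2 Rt w Lm t r t' r' : 0 < P -> 0 < s2 -> (1 <= w)%nat -> (1 <= Lm)%nat ->
  sumR (clo w r) (chi Lm r) (fun c' => psibar P s2 Rt w Lm t c') <=
  sumR (clo w r') (chi Lm r') (fun c' => psibar P s2 Rt w Lm t' c') ->
  1 / phibar P s2 Rt w Lm t' r' <= 1 / phibar P s2 Rt w Lm t r.
Proof. intros HP Hs Hw HL H. apply inv_le; [apply phibar_pos; auto|]. unfold phibar.
 pose proof (coef_pos P s2 w Lm HP Hs Hw HL).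
 apply Rmult_le_compat_l; [lra|]. apply Rplus_le_compat_l. apply Rmult_le_compat_l; [lra|]. auto. Qed.

Lemma sum0 P s2 Rt w Lm lo hi : sumR lo hi (fun c' => psibar P s2 Rt w Lm 0 c') = INR (S hi - lo).
Proof. unfold sumR. rewrite (sa_ext _ _ _ (fun _ => 1)) by (intros; reflexivity).
 rewrite sa_const. ring. Qed.

Lemma psi_mono P s2 Rt w Lm : 0 < P -> 0 < s2 -> (1 <= w)%nat -> (1 <= Lm)%nat ->
  forall t c, psibar P s2 Rt w Lm (S t) c <= psibar P s2 Rt w Lm t c.
Proof. intros HP Hs Hw HL. induction t as [|t IH]; intros c.
 - change (psibar P s2 Rt w Lm 0 c) with 1. destruct (psi01 P s2 Rt w Lm 1 c); lra.
 - destruct (psi01 P s2 Rt w Lm (S t) c) as [e|e].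
   + rewrite e. apply psi_zero_iff in e.
     assert (psibar P s2 Rt w Lm (S (S t)) c = 0); [|lra].
     apply psi_zero_iff. eapply Rlt_le_trans; [exact e|].
     apply Rmult_le_compat_l. { unfold Rdiv; apply Rmult_le_pos; [lra|]. left; apply Rinv_0_lt_compat, lt_0_INR; lia. }
     unfold sumR. apply sa_le; intros r _. apply phibar_le; auto.
     unfold sumR. apply sa_le; intros i _. apply IH.
   + rewrite e. destruct (psi01 P s2 Rt w Lm (S (S t)) c); lra.
Qed.

Lemma part3_step P s2 Rt w Lm c0 : 0 < P -> 0 < s2 -> (1 <= w)%nat -> (1 <= Lm)%nat ->
  (1 <= c0)%nat ->
  (forall c : nat, (1 <= c <= Lm)%nat -> (c <= c0 \/ Lm + 1 - c0 <= c)%nat ->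
        psibar P s2 Rt w Lm 1 c = 0) ->
  forall t, (forall c, (1 <= c <= Lm)%nat -> (Nat.min c (Lm + 1 - c) <= t * c0)%nat ->
        psibar P s2 Rt w Lm t c = 0) ->
  forall c, (1 <= c <= Lm)%nat -> (Nat.min c (Lm + 1 - c) <= S t * c0)%nat ->
        psibar P s2 Rt w Lm (S t) c = 0.
Proof.
 intros HP Hs Hw HL Hc0 H1 t IH c Hc Hm.
 rewrite Nat.mul_succ_l in Hm. remember (t * c0)%nat as d eqn:Hd.
 assert (HPw : 0 <= P / INR w).
 { unfold Rdiv; apply Rmult_le_pos; [lra|]. left; apply Rinv_0_lt_compat, lt_0_INR; lia. }
 destruct (le_lt_dec (Nat.min c (Lm + 1 - c)) d) as [Hle|Hgt].
 - pose proof (psi_mono P s2 Rt w Lm HP Hs Hw HL t c). rewrite (IH c Hc) in H by (subst; lia).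
   destruct (psi01 P s2 Rt w Lm (S t) c); lra.
 - destruct (le_lt_dec c (d + c0)) as [Hl|Hr].
   + destruct (Nat.le_exists_sub d c) as [c' [Hc' _]]; [lia|]. subst c.
     assert (E1 := H1 c' ltac:(lia) ltac:(lia)). apply psi_zero_iff in E1.
     apply psi_zero_iff. eapply Rlt_le_trans; [exact E1|].
     rewrite !sumR_w by lia. rewrite sa_shift.
     apply Rmult_le_compat_l; [exact HPw|]. apply sa_le; intros r Hrr.
     apply phibar_le; auto. rewrite sum0.
     unfold sumR. eapply Rle_trans; [apply sa_count with (A := S d) (B := Lm)|apply le_INR].
     * intros i Hi. split; [destruct (psi01 P s2 Rt w Lm t i); lra|].
       intros Hi2. apply IH; unfold clo, chi in *; lia.
     * unfold clo, chi in *; lia.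
   + assert (E1 := H1 (c + d)%nat ltac:(lia) ltac:(lia)). apply psi_zero_iff in E1.
     apply psi_zero_iff. eapply Rlt_le_trans; [exact E1|].
     rewrite !sumR_w by lia. rewrite sa_shift.
     apply Rmult_le_compat_l; [exact HPw|]. apply sa_le; intros r Hrr.
     apply phibar_le; auto. rewrite sum0.
     unfold sumR. eapply Rle_trans; [apply sa_count with (A := 1%nat) (B := (Lm - d)%nat)|apply le_INR].
     * intros i Hi. split; [destruct (psi01 P s2 Rt w Lm t i); lra|].
       intros Hi2. apply IH; unfold clo, chi in *; lia.
     * unfold clo, chi in *; lia.
Qed.

Definition Gf (a : R) (w : nat) (x : R) := (a / INR w) / (1 + a * x / INR w).
Definition Lf (a : R) (w : nat) (x : R) := ln (1 + a * x / INR w).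

Lemma ln_lt_id u : 0 < u -> ln (1 + u) < u.
Proof. intros. rewrite <- (ln_exp u) at 2. apply ln_increasing; [lra|]. apply exp_ineq1; lra. Qed.

Lemma term a w x : 0 < a -> (1 <= w)%nat -> 0 <= x -> Lf a w (x + 1) - Lf a w x <= Gf a w x.
Proof. intros Ha Hw Hx. unfold Lf, Gf.
 assert (Hwp : 0 < INR w) by (apply lt_0_INR; lia).
 assert (Hy : 0 < 1 + a * x / INR w).
 { assert (0 <= a * x / INR w) by (apply Rmult_le_pos; [nra| left; apply Rinv_0_lt_compat; lra]). lra. }
 set (y0 := 1 + a * x / INR w) in *.
 set (u := a / INR w / y0).
 assert (Hu : 0 < u) by (unfold u; apply Rdiv_lt_0_compat; [apply Rdiv_lt_0_compat|]; lra).
 replace (1 + a * (x + 1) / INR w) with (y0 * (1 + u)) by (unfold u, y0 in *; assert (0 <= a*x) by nra; field; repeat split; lra).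
 rewrite ln_mult by lra. pose proof (ln_lt_id u Hu). lra. Qed.

Lemma row0 P s2 Rt w Lm r : 0 < s2 -> (1 <= w)%nat -> 0 <= kappa w Lm * snr P s2 ->
  kappa w Lm * (P / INR w) * (1 / phibar P s2 Rt w Lm 0 r) =
  Gf (kappa w Lm * snr P s2) w (INR (S (chi Lm r) - clo w r)).
Proof. intros Hs Hw Ha. unfold phibar. rewrite sum0. unfold Gf.
 assert (Hwp : 0 < INR w) by (apply lt_0_INR; lia).
 set (N := INR (S (chi Lm r) - clo w r)). assert (0 <= N) by apply pos_INR.
 set (a := kappa w Lm * snr P s2) in *.
 assert (0 <= a * N / INR w) by (apply Rmult_le_pos; [nra| left; apply Rinv_0_lt_compat; lra]).
 replace (kappa w Lm * snr P s2 / INR w * N) with (a * N / INR w) by (unfold a; field; lra).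
 replace (kappa w Lm * (P / INR w)) with (a * s2 / INR w) by (unfold a, snr; field; lra).
 assert (0 <= a * N) by nra. field. repeat split; lra. Qed.

Lemma left_col P s2 Rt w Lm c : 0 < P -> 0 < s2 -> (1 <= w)%nat -> (2 * w - 1 <= Lm)%nat ->
  (1 <= c <= w)%nat ->
  INR c * Gf (kappa w Lm * snr P s2) w (INR w) + Lf (kappa w Lm * snr P s2) w (INR w)
   - Lf (kappa w Lm * snr P s2) w (INR c) <=
  kappa w Lm * (P / INR w * sumR c (c + w - 1) (fun r => 1 / phibar P s2 Rt w Lm 0 r)).
Proof.
 intros HP Hs Hw HL Hc.
 assert (Hk := kappa_pos w Lm Hw ltac:(lia)).
 assert (Ha : 0 < kappa w Lm * snr P s2) by (apply Rmult_lt_0_compat; [lra|unfold snr; apply Rdiv_lt_0_compat; lra]).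
 set (a := kappa w Lm * snr P s2) in *.
 rewrite sumR_w by lia. rewrite <- Rmult_assoc, <- sa_scale.
 rewrite (sa_ext _ _ _ (fun r => Gf a w (INR (S (chi Lm r) - clo w r))))
   by (intros; apply row0; auto; left; exact Ha).
 rewrite (sa_split c w (w - c)) by lia.
 pose proof (sa_tele c (w - c) (fun r => Gf a w (INR (S (chi Lm r) - clo w r)))
               (fun i => Lf a w (INR i))) as T.
 cbv beta in T. replace (c + (w - c))%nat with w in T by lia.
 assert (T' := T ltac:(intros i Hi;
    replace (S (chi Lm i) - clo w i)%nat with i by (unfold chi, clo; lia);
    rewrite S_INR; apply term; [lra|lia|apply pos_INR])).
 rewrite (sa_ext (c + (w - c)) _ _ (fun _ => Gf a w (INR w))).
 2:{ intros i Hi. do 2 f_equal. unfold chi, clo; lia. }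
 rewrite sa_const. replace (w - (w - c))%nat with c by lia. lra.
Qed.

Lemma right_col P s2 Rt w Lm c cc : 0 < P -> 0 < s2 -> (1 <= w)%nat -> (2 * w - 1 <= Lm)%nat ->
  (1 <= c <= w)%nat -> (cc + c = Lm + 1)%nat ->
  INR c * Gf (kappa w Lm * snr P s2) w (INR w) + Lf (kappa w Lm * snr P s2) w (INR w)
   - Lf (kappa w Lm * snr P s2) w (INR c) <=
  kappa w Lm * (P / INR w * sumR cc (cc + w - 1) (fun r => 1 / phibar P s2 Rt w Lm 0 r)).
Proof.
 intros HP Hs Hw HL Hc Hcc.
 assert (Hk := kappa_pos w Lm Hw ltac:(lia)).
 assert (Ha : 0 < kappa w Lm * snr P s2) by (apply Rmult_lt_0_compat; [lra|unfold snr; apply Rdiv_lt_0_compat; lra]).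
 set (a := kappa w Lm * snr P s2) in *.
 rewrite sumR_w by lia. rewrite <- Rmult_assoc, <- sa_scale.
 rewrite (sa_ext _ _ _ (fun r => Gf a w (INR (S (chi Lm r) - clo w r))))
   by (intros; apply row0; auto; left; exact Ha).
 rewrite (sa_split cc w c) by lia.
 pose proof (sa_tele (cc + c) (w - c) (fun r => Gf a w (INR (S (chi Lm r) - clo w r)))
               (fun i => - Lf a w (INR (Lm + w + 1 - i)))) as T.
 cbv beta in T.
 replace (Lm + w + 1 - (cc + c + (w - c)))%nat with c in T by lia.
 replace (Lm + w + 1 - (cc + c))%nat with w in T by lia.
 assert (T' := T ltac:(intros i Hi;
    replace (S (chi Lm i) - clo w i)%nat with (Lm + w - i)%nat by (unfold chi, clo; lia);
    replace (Lm + w + 1 - S i)%nat with (Lm + w - i)%nat by lia;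
    replace (Lm + w + 1 - i)%nat with (S (Lm + w - i)) by lia;
    rewrite S_INR; pose proof (term a w (INR (Lm + w - i)) Ha Hw (pos_INR _)); lra)).
 rewrite (sa_ext cc c _ (fun _ => Gf a w (INR w))).
 2:{ intros i Hi. do 2 f_equal. unfold chi, clo; lia. }
 rewrite sa_const. lra.
Qed.

Lemma div_k k x y : 0 < k -> y < k * x -> y / k < x.
Proof. intros. apply (Rmult_lt_reg_l k); auto. replace (k * (y / k)) with y by (field; lra). lra. Qed.

Theorem mainTheorem8 (omega Lam : nat) (P sigma2 Rt : R) :
  (1 <= omega)%nat ->
  (2 * omega - 1 <= Lam)%nat ->
  0 < P -> 0 < sigma2 ->
  0 < Rt ->
  Rt < 1 / (2 * kappa omega Lam) * ln (1 + kappa omega Lam * snr P sigma2) ->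
  (* (1) *)
  (INR omega > / (1 / (exp (2 * Rt * kappa omega Lam) - 1)
                  - 1 / (kappa omega Lam * snr P sigma2)) ->
     psibar P sigma2 Rt omega Lam 1 1 = 0 /\
     psibar P sigma2 Rt omega Lam 1 Lam = 0)
  /\
  (* (2) *)
  (forall c : nat, (1 <= c <= omega - 1)%nat ->
     INR c < INR omega * (1 + kappa omega Lam * snr P sigma2)
               / (kappa omega Lam * snr P sigma2) ^ 2
               * (ln (1 + kappa omega Lam * snr P sigma2) - 2 * Rt * kappa omega Lam) ->
     psibar P sigma2 Rt omega Lam 1 c = 0 /\
     psibar P sigma2 Rt omega Lam 1 (Lam + 1 - c) = 0)
  /\
  (* (3) *)
  (forall c0 : nat, (1 <= c0 <= omega - 1)%nat ->
     (forall c : nat, (1 <= c <= Lam)%nat -> (c <= c0 \/ Lam + 1 - c0 <= c)%nat ->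
        psibar P sigma2 Rt omega Lam 1 c = 0) ->
     (forall t : nat, (1 <= t)%nat ->
        forall c : nat, (1 <= c <= Lam)%nat ->
          (Nat.min c (Lam + 1 - c) <= t * c0)%nat ->
          psibar P sigma2 Rt omega Lam t c = 0)
     /\
     (forall t : nat, ((Lam + 2 * c0 - 1) / (2 * c0) <= t)%nat ->
        forall c : nat, (1 <= c <= Lam)%nat ->
          psibar P sigma2 Rt omega Lam t c = 0)).
Proof.
 intros Hw HL HP Hs HR HRlt.
 assert (Hk := kappa_pos omega Lam Hw ltac:(lia)).
 assert (Ha : 0 < kappa omega Lam * snr P sigma2) by (apply Rmult_lt_0_compat; [lra|unfold snr; apply Rdiv_lt_0_compat; lra]).
 assert (HW : 0 < INR omega) by (apply lt_0_INR; lia).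
 assert (Red : forall c, 2 * Rt * kappa omega Lam <
            kappa omega Lam * (P / INR omega * sumR c (c + omega - 1)
                (fun r => 1 / phibar P sigma2 Rt omega Lam 0 r)) ->
            psibar P sigma2 Rt omega Lam 1 c = 0).
 { intros c Hc. apply psi_zero_iff. apply (Rmult_lt_reg_l (kappa omega Lam)); auto. lra. }
 set (k := kappa omega Lam) in *.
 set (a := k * snr P sigma2) in *.
 set (W := INR omega) in *.
 assert (Hln : 2 * Rt * k < ln (1 + a)).
 { assert (H := Rmult_lt_compat_l (2 * k) _ _ ltac:(lra) HRlt).
   replace (2 * k * (1 / (2 * k) * ln (1 + a))) with (ln (1 + a)) in H by (field; lra). lra. }
 split; [|split].
 - intros Hom.
   set (E := exp (2 * Rt * k)) in *.
   assert (HE1 : 1 < E).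
   { unfold E. pose proof (exp_ineq1 (2 * Rt * k) ltac:(nra)). nra. }
   assert (HE2 : E < 1 + a).
   { unfold E. rewrite <- (exp_ln (1 + a)) by lra. apply exp_increasing. lra. }
   set (e1 := E - 1) in *. assert (He1 : 0 < e1) by (unfold e1; lra). assert (He2 : e1 < a) by (unfold e1; lra).
   assert (HD : 0 < 1 / e1 - 1 / a).
   { unfold Rdiv; rewrite !Rmult_1_l. assert (/ a < / e1) by (apply Rinv_lt_contravar; [nra|lra]). lra. }
   assert (HWD : W * (1 / e1 - 1 / a) > 1).
   { assert (H := Rmult_lt_compat_r (1 / e1 - 1 / a) _ _ HD Hom).
     rewrite Rinv_l in H by lra. lra. }
   assert (Hkey : e1 * (1 + a / W) < a).
   { assert (H := Rmult_lt_compat_r (a * e1) _ _ ltac:(nra) HWD).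
     replace (W * (1 / e1 - 1 / a) * (a * e1)) with (W * a - W * e1) in H by (field; lra).
     apply (Rmult_lt_reg_r W); auto.
     replace (e1 * (1 + a / W) * W) with (e1 * W + e1 * a) by (field; lra). nra. }
   assert (Hfin : 2 * Rt * k < 1 * Gf a omega W + Lf a omega W - Lf a omega 1).
   { pose proof (term a omega W Ha Hw ltac:(lra)).
     enough (2 * Rt * k < Lf a omega (W + 1) - Lf a omega 1) by lra.
     unfold Lf; fold W.
     assert (Hp : 0 < 1 + a * 1 / W) by (assert (0 < a * 1 / W) by (apply Rdiv_lt_0_compat; lra); lra).
     enough (ln E + ln (1 + a * 1 / W) < ln (1 + a * (W + 1) / W)) by (assert (ln E = 2 * Rt * k) by (unfold E; apply ln_exp); lra).
     rewrite <- ln_mult by lra. apply ln_increasing; [nra|].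
     replace (a * 1 / W) with (a / W) by (field; lra).
     replace (a * (W + 1) / W) with (a + a / W) by (field; lra).
     unfold e1 in Hkey. nra. }
   split.
   + apply Red. eapply Rlt_le_trans; [|apply (left_col P sigma2 Rt omega Lam 1); auto; lia].
     fold k a W. simpl INR. exact Hfin.
   + apply Red. eapply Rlt_le_trans; [|apply (right_col P sigma2 Rt omega Lam 1 Lam); auto; lia].
     fold k a W. simpl INR. exact Hfin.
 - intros c Hc Hcx.
   assert (HcR : 0 < INR c) by (apply lt_0_INR; lia).
   assert (Hfin : 2 * Rt * k < INR c * Gf a omega W + Lf a omega W - Lf a omega (INR c)).
   { unfold Gf, Lf; fold W. replace (a * W / W) with a by (field; lra).
     assert (H1 := ln_lt_id (a * INR c / W) ltac:(apply Rdiv_lt_0_compat; nra)).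
     assert (H2 := Rmult_lt_compat_r (a ^ 2 / (W * (1 + a))) _ _
                     ltac:(apply Rdiv_lt_0_compat; nra) Hcx).
     replace (W * (1 + a) / a ^ 2 * (ln (1 + a) - 2 * Rt * k) * (a ^ 2 / (W * (1 + a))))
       with (ln (1 + a) - 2 * Rt * k) in H2 by (field; split; nra).
     assert (Eq : INR c * (a / W / (1 + a)) - a * INR c / W = - (INR c * (a ^ 2 / (W * (1 + a)))))
       by (field; split; nra).
     lra. }
   split.
   + apply Red. eapply Rlt_le_trans; [|apply (left_col P sigma2 Rt omega Lam c); auto; lia].
     fold k a W. exact Hfin.
   + apply Red. eapply Rlt_le_trans; [|apply (right_col P sigma2 Rt omega Lam c); auto; lia].
     fold k a W. exact Hfin.
 - intros c0 Hc0 H1.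
   assert (A : forall n c, (1 <= c <= Lam)%nat -> (Nat.min c (Lam + 1 - c) <= S n * c0)%nat ->
             psibar P sigma2 Rt omega Lam (S n) c = 0).
   { induction n as [|n IH]; intros c Hc Hm.
     - apply H1; auto. simpl in Hm. lia.
     - apply (part3_step P sigma2 Rt omega Lam c0); auto; lia. }
   split.
   + intros t Ht c Hc Hm. destruct t as [|t]; [lia|]. apply A; auto.
   + intros t Ht c Hc.
     set (q := ((Lam + 2 * c0 - 1) / (2 * c0))%nat) in *.
     assert (Hdm := Nat.div_mod (Lam + 2 * c0 - 1) (2 * c0) ltac:(lia)).
     assert (Hmb := Nat.mod_upper_bound (Lam + 2 * c0 - 1) (2 * c0) ltac:(lia)).
     fold q in Hdm.
     assert (Hmono := Nat.mul_le_mono_l q t c0 Ht).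
     destruct t as [|t]; [nia|]. apply A; auto. nia.
Qed.
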